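(* Let $n=2m+1$ be odd and let $\mathbf{X}=\{X_{rj}:r,j=1,\dots,n\}$ be the switch variables of the standard lightbulb process. Given $\mathbf{X}$, let $B_m$ be uniform on $\{j:X_{mj}=0\}$ and $B_{m+1}$ uniform on $\{j:X_{m+1,j}=1\}$, and let $C_m,C_{m+1}$ be symmetric Bernoulli ($P(C=0)=P(C=1)=1/2$) variables independent of each other, of $\mathbf{X}$ and of $B_m,B_{m+1}$. Define $\mathbf{V}=\{V_{rj}\}$ by $V_{rj}=X_{rj}$ for $r\notin\{m,m+1\}$; $V_{mj}=X_{mj}$ for $j\ne B_m$, $V_{m,B_m}=C_m$; $V_{m+1,j}=X_{m+1,j}$ for $j\ne B_{m+1}$, $V_{m+1,B_{m+1}}=C_{m+1}$. Let $V_j=(\sum_{r=1}^nV_{rj})\bmod 2$ and $V=\sum_{j=1}^nV_j$. Then: the row vectors $(V_{r1},\dots,V_{rn})$, $r=1,\dots,n$, are mutually independent; for $r\in\{m,m+1\}$, $$\mathcal{L}(V_{r1},\dots,V_{rn})=\tfrac12\mathcal{L}(X_{m1},\dots,X_{mn})+\tfrac12\mathcal{L}(X_{m+1,1},\dots,X_{m+1,n});$$ $P(V_j=1)=1/2$ for all $j$; $EV=n/2$; and $\mathrm{Var}(V)=\sigma_V^2:=\frac n4(1-\overline{\lambda}_{n,2,\mathbf{n}})+\frac{n^2}{4}\overline{\lambda}_{n,2,\mathbf{n}}$.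
   Context: Standard lightbulb process: $n$ bulbs, all initially off, $n$ stages; at stage $r=1,\dots,n$ a uniformly random subset of exactly $r$ bulbs is toggled, independently across stages; $X_{rj}\in\{0,1\}$ is $1$ iff bulb $j$ is toggled at stage $r$. With $(n)_t=n(n-1)\cdots(n-t+1)$, define $\lambda_{n,b,s}=\sum_{t=0}^b\binom bt(-2)^t\frac{(s)_t}{(n)_t}$. For $n=2m+1$, $\overline{\lambda}_{n,2,\mathbf{n}}=\Big(\prod_{s\in\{1,\dots,n\}\setminus\{m,m+1\}}\lambda_{n,2,s}\Big)\Big(\tfrac12(\lambda_{n,2,m}+\lambda_{n,2,m+1})\Big)^2$. $\mathcal{L}$ denotes law; a combination $\frac12\mathcal{L}_1+\frac12\mathcal{L}_2$ is the equal mixture. *)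

(* Defs.v *)
From HB Require Import structures.
From mathcomp Require Import all_boot all_order all_algebra.
Set Implicit Arguments. Unset Strict Implicit. Unset Printing Implicit Defensive.
Import Order.TTheory GRing.Theory Num.Theory.
Local Open Scope ring_scope.

Definition lam {R : realFieldType} (n b s : nat) : R :=
  \sum_(t < b.+1) ('C(b, t))%:R * (-2) ^+ t * (s ^_ t)%:R / (n ^_ t)%:R.

Section Lightbulb.
Variables (R : realFieldType) (m : nat).

Definition nb : nat := m.*2.+1.

Definition lambar : R :=
  (\prod_(1 <= s < nb.+1 | (s != m) && (s != m.+1)) lam nb 2 s) *
  (2^-1 * (lam nb 2 m + lam nb 2 m.+1)) ^+ 2.

(* Stages r = 1..n are indexed by ordinals i : 'I_n with r = i + 1;
   bulbs j = 1..n are indexed by 'I_n. *)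
Definition stage (r : nat) : 'I_nb := inord r.-1.

Definition Row := {ffun 'I_nb -> bool}.
Definition Mat := {ffun 'I_nb -> Row}.

Definition Omega := (Mat * 'I_nb * 'I_nb * bool * bool)%type.

Definition Xof (w : Omega) : Mat := w.1.1.1.1.
Definition Bm (w : Omega) : 'I_nb := w.1.1.1.2.
Definition Bm1 (w : Omega) : 'I_nb := w.1.1.2.
Definition Cm (w : Omega) : bool := w.1.2.
Definition Cm1 (w : Omega) : bool := w.2.

Definition unif_row (k : nat) (x : Row) : R :=
  if #|[set j | x j]| == k then ('C(nb, k))%:R^-1 else 0.

Definition unif_on (A : {set 'I_nb}) (b : 'I_nb) : R :=
  if b \in A then (#|A|%:R)^-1 else 0.

(* joint probability weight of a sample point:
   independent stages (stage i+1 toggles a uniform (i+1)-subset),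
   B_m uniform on {j : X_{mj} = 0}, B_{m+1} uniform on {j : X_{m+1,j} = 1}
   given X, and C_m, C_{m+1} independent fair bits *)
Definition weight (w : Omega) : R :=
  (\prod_(i < nb) unif_row i.+1 (Xof w i)) *
  unif_on [set j | ~~ Xof w (stage m) j] (Bm w) *
  unif_on [set j | Xof w (stage m.+1) j] (Bm1 w) *
  2^-1 * 2^-1.

Definition prob (E : pred Omega) : R := \sum_(w : Omega | E w) weight w.
Definition expect (f : Omega -> R) : R := \sum_(w : Omega) weight w * f w.
Definition var (f : Omega -> R) : R := expect (fun w => (f w - expect f) ^+ 2).

Definition Vrow (w : Omega) (i : 'I_nb) : Row :=
  [ffun j =>
    if i == stage m then (if j == Bm w then Cm w else Xof w i j)
    else if i == stage m.+1 then (if j == Bm1 w then Cm1 w else Xof w i j)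
    else Xof w i j].

Definition Vj (w : Omega) (j : 'I_nb) : nat := (\sum_(i < nb) Vrow w i j) %% 2.
Definition Vtot (w : Omega) : nat := \sum_(j < nb) Vj w j.

End Lightbulb.

Arguments prob R {m} E.
Arguments expect R {m} f.
Arguments var R {m} f.

(* Main.v *)
Require Import Defs.
From HB Require Import structures.
From mathcomp Require Import all_boot all_order all_algebra.
From mathcomp Require Import fingroup perm.
From mathcomp Require Import ring lra zify.
Import Order.TTheory GRing.Theory Num.Theory.
Local Open Scope ring_scope.
Set Implicit Arguments. Unset Strict Implicit.

Lemma sum_pair (R : realFieldType) (A B : finType) (F : A * B -> R) :
  \sum_(p : A * B) F p = \sum_a \sum_b F (a, b).
Proof. by rewrite pair_big; apply: eq_bigr => -[]. Qed.

Section S.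
Variable R : realFieldType.
Variable m : nat.
Hypothesis hm : (0 < m)%N.
Local Notation n := (nb m).
Local Notation sm := (stage m m).
Local Notation sm1 := (stage m m.+1).

Definition upd (x : Row m) (b : 'I_n) (c : bool) : Row m :=
  [ffun j => if j == b then c else x j].
Definition Zs (x : Row m) : {set 'I_n} := [set j | ~~ x j].
Definition Os (x : Row m) : {set 'I_n} := [set j | x j].

Definition G (i : 'I_n) (x : Row m) (h : Row m -> R) : R :=
  if i == sm then \sum_b \sum_c (unif_on R (Zs x) b / 2 * h (upd x b c))
  else if i == sm1 then \sum_b \sum_c (unif_on R (Os x) b / 2 * h (upd x b c))
  else h x.

Lemma sm_val : val sm = m.-1.
Proof. rewrite /= inordK //; rewrite /nb; case: m => //= k; lia. Qed.
Lemma sm1_val : val sm1 = m.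
Proof. rewrite /= inordK //; rewrite /nb /=; lia. Qed.
Lemma sm_neq : sm1 != sm.
Proof. apply/eqP => /(congr1 val); rewrite sm_val sm1_val; move: hm; case: m => //= k; lia. Qed.

Section Fac.
Variable g : 'I_n -> Row m -> Row m -> R.

Lemma prodV (X : Mat m) b b' c c' :
  \prod_(i < n) g i (X i) (Vrow (m:=m) (X, b, b', c, c') i) =
  g sm (X sm) (upd (X sm) b c) * (g sm1 (X sm1) (upd (X sm1) b' c') *
    \prod_(i < n | (i != sm) && (i != sm1)) g i (X i) (X i)).
Proof.
rewrite (bigD1 sm) //= (bigD1 sm1) /=; last exact: sm_neq.
congr (_ * (_ * _)).
- by congr (g _ _ _); apply/ffunP => j; rewrite !ffunE eqxx.
- by congr (g _ _ _); apply/ffunP => j; rewrite !ffunE eqxx (negbTE sm_neq).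
- apply: eq_bigr => i /andP[h1 h2]; congr (g _ _ _).
  by apply/ffunP => j; rewrite !ffunE (negbTE h1) (negbTE h2).
Qed.

Lemma prodG (X : Mat m) :
  \prod_(i < n) G i (X i) (g i (X i)) =
  (\sum_b \sum_c (unif_on R (Zs (X sm)) b / 2 * g sm (X sm) (upd (X sm) b c))) *
  ((\sum_b \sum_c (unif_on R (Os (X sm1)) b / 2 * g sm1 (X sm1) (upd (X sm1) b c))) *
    \prod_(i < n | (i != sm) && (i != sm1)) g i (X i) (X i)).
Proof.
rewrite (bigD1 sm) //= (bigD1 sm1) /=; last exact: sm_neq.
rewrite /G eqxx (negbTE sm_neq) eqxx.
congr (_ * (_ * _)).
apply: eq_bigr => i /andP[h1 h2].
by rewrite (negbTE h1) (negbTE h2).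
Qed.

Lemma factor :
  expect R (fun w : Omega m => \prod_(i < n) g i (Xof w i) (Vrow w i)) =
  \prod_(i < n) \sum_(x : Row m) unif_row R i.+1 x * G i x (g i x).
Proof.
rewrite bigA_distr_bigA /expect !sum_pair /=.
apply: eq_bigr => X _.
rewrite big_split /= prodG.
under eq_bigr do under eq_bigr do under eq_bigr do under eq_bigr do rewrite prodV.
rewrite /weight /=.
set P := \prod_(i < n) _.
set rest := \prod_(i < n | _) _.
rewrite big_distrl big_distrr /=; apply: eq_bigr => b _.
rewrite exchange_big /=.
rewrite big_distrl big_distrr /=; apply: eq_bigr => c _.
rewrite big_distrl !big_distrr /=; apply: eq_bigr => b' _.
rewrite big_distrl !big_distrr /=; apply: eq_bigr => c' _.
rewrite /Xof /Bm /Bm1 /Zs /Os /=.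
ring.
Qed.
End Fac.

Definition Sc (c0 : bool) (x : Row m) : {set 'I_n} := [set j | x j == c0].

Lemma Zs_S x : Zs x = Sc false x.
Proof. by apply/setP => j; rewrite !inE; case: (x j). Qed.
Lemma Os_S x : Os x = Sc true x.
Proof. by apply/setP => j; rewrite !inE; case: (x j). Qed.

Lemma card_Zs x : #|Zs x| = (n - #|Os x|)%N.
Proof.
have <- : ~: Os x = Zs x by apply/setP => j; rewrite !inE.
have := cardsC (Os x); rewrite card_ord; lia.
Qed.

Lemma sum_unif_on (A : {set 'I_n}) : A != set0 -> \sum_b unif_on R A b = 1.
Proof.
move=> hA; rewrite /unif_on -big_mkcond /= sumr_const -[LHS]mulr_natr mulVf //.
by rewrite pnatr_eq0 -lt0n card_gt0.
Qed.

Lemma flip (F : Row m -> R) b c0 :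
  \sum_(x : Row m | x b == c0) F (upd x b (~~ c0)) = \sum_(v : Row m | v b == ~~ c0) F v.
Proof.
symmetry.
rewrite (reindex_onto (fun x => upd x b (~~ c0)) (fun v => upd v b c0)) /=.
  apply: eq_bigl => x; rewrite ffunE eqxx eqxx /=.
  apply/eqP/eqP => [<-|hx]; first by rewrite ffunE eqxx.
  by apply/ffunP => j; rewrite !ffunE; case: eqP => // ->.
move=> v /eqP hv; apply/ffunP => j; rewrite !ffunE.
by case: eqP => // ->.
Qed.

Lemma upd_id (x : Row m) b c : x b = c -> upd x b c = x.
Proof. by move=> h; apply/ffunP => j; rewrite ffunE; case: eqP => // ->. Qed.

Definition Cn : R := ('C(n, m))%:R.
Lemma Cn_neq0 : Cn != 0.
Proof. by rewrite /Cn pnatr_eq0 -lt0n bin_gt0 /nb; lia. Qed.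

Section Half.
Variables (c0 : bool) (k k' : nat).
Hypothesis hS : forall x, #|Os x| = k -> #|Sc c0 x| = m.+1.
Hypothesis hS' : forall v, #|Os v| = k' -> #|Sc (~~ c0) v| = m.+1.
Hypothesis hC : 'C(n, k) = 'C(n, m).
Hypothesis hC' : 'C(n, k') = 'C(n, m).
Hypothesis hcard : forall (x : Row m) b, x b = c0 ->
  (#|Os x| == k) = (#|Os (upd x b (~~ c0))| == k').

Lemma keep (h : Row m -> R) :
  \sum_(x : Row m) unif_row R k x * \sum_b (unif_on R (Sc c0 x) b / 2 * h (upd x b c0)) =
  \sum_(x : Row m) unif_row R k x / 2 * h x.
Proof.
apply: eq_bigr => x _; rewrite /unif_row -/(Os x).
case: eqP => hx; last by rewrite !mul0r.
have -> : \sum_b (unif_on R (Sc c0 x) b / 2 * h (upd x b c0)) =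
          (\sum_b unif_on R (Sc c0 x) b) / 2 * h x.
  rewrite -mulrA big_distrl /=; apply: eq_bigr => b _; rewrite mulrA.
  rewrite /unif_on; case: ifP => hb; last by rewrite !mul0r.
  by rewrite upd_id //; move: hb; rewrite inE => /eqP.
rewrite sum_unif_on ?mul1r ?mulrA //.
by rewrite -card_gt0 hS.
Qed.

Lemma flippart (h : Row m -> R) :
  \sum_(x : Row m) unif_row R k x * \sum_b (unif_on R (Sc c0 x) b / 2 * h (upd x b (~~ c0))) =
  \sum_(x : Row m) unif_row R k' x / 2 * h x.
Proof.
pose K : R := (Cn * m.+1%:R)^-1.
transitivity (\sum_b \sum_(x : Row m | x b == c0)
   ((if #|Os (upd x b (~~ c0))| == k' then K else 0) / 2 * h (upd x b (~~ c0)))).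
  under eq_bigr do rewrite big_distrr /=.
  rewrite exchange_big /=; apply: eq_bigr => b _.
  rewrite [RHS]big_mkcond /=; apply: eq_bigr => x _.
  rewrite /unif_row /unif_on -/(Os x) inE.
  case: (boolP (x b == c0)) => hb; last by rewrite !mul0r mulr0.
  rewrite -(hcard (eqP hb)).
  case: eqP => hx; last by rewrite !mul0r.
  by rewrite hS // hC /K /Cn invfM !mulrA.
rewrite (eq_bigr _ (fun b _ => flip (fun v => (if #|Os v| == k' then K else 0) / 2 * h v) b c0)).
rewrite (eq_bigr _ (fun b _ => big_mkcond _ _)) /=.
rewrite exchange_big /=; apply: eq_bigr => v _.
rewrite -big_mkcond /= sumr_const /unif_row -/(Os v).
case: eqP => hv; last by rewrite !mul0r mul0rn.
have -> : #|[pred i | v i == ~~ c0]| = #|Sc (~~ c0) v|.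
  by apply: eq_card => j; rewrite /Sc !inE.
rewrite hS' // hC' /K /Cn -[LHS]mulr_natr.
have h1 : (m.+1)%:R != 0 :> R by rewrite pnatr_eq0.
have h2 := Cn_neq0; rewrite /Cn in h2.
field; rewrite h2 /=; apply/eqP => hh; have : (0 : R) <= m%:R := ler0n _ _; lra.
Qed.
End Half.

Lemma Cm1 : 'C(n, m.+1) = 'C(n, m).
Proof. have := bin_sub (n:=n) (m:=m); rewrite /nb => <-; [congr binomial; lia | lia]. Qed.

Lemma card_updT (x : Row m) b : x b = false -> #|Os (upd x b true)| = (#|Os x|).+1.
Proof.
move=> hb; have -> : Os (upd x b true) = b |: Os x.
  by apply/setP => j; rewrite !inE ffunE; case: eqP.
by rewrite cardsU1 inE hb.
Qed.

Lemma card_updF (x : Row m) b : x b = true -> #|Os x| = (#|Os (upd x b false)|).+1.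
Proof.
move=> hb; have -> : Os x = b |: Os (upd x b false).
  by apply/setP => j; rewrite !inE ffunE; case: eqP => // ->; rewrite hb.
by rewrite cardsU1 !inE ffunE eqxx.
Qed.

Lemma card_Sc (x : Row m) c k : #|Os x| = k -> #|Sc c x| = if c then k else (n - k)%N.
Proof. by case: c => <-; rewrite -?Os_S -?Zs_S ?card_Zs. Qed.

Definition mix (x : Row m) : R := 2^-1 * unif_row R m x + 2^-1 * unif_row R m.+1 x.
Definition rho (i : 'I_n) (x : Row m) : R :=
  if (i == sm) || (i == sm1) then mix x else unif_row R i.+1 x.

Lemma split_c (k : nat) (A : Row m -> {set 'I_n}) h :
  \sum_(x : Row m) unif_row R k x * \sum_b \sum_c (unif_on R (A x) b / 2 * h (upd x b c)) =
  \sum_(x : Row m) unif_row R k x * \sum_b (unif_on R (A x) b / 2 * h (upd x b true)) +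
  \sum_(x : Row m) unif_row R k x * \sum_b (unif_on R (A x) b / 2 * h (upd x b false)).
Proof.
rewrite -big_split /=; apply: eq_bigr => x _; rewrite -mulrDr -big_split /=.
by congr (_ * _); apply: eq_bigr => b _; rewrite big_bool.
Qed.

Lemma hS0 : forall x : Row m, #|Os x| = m -> #|Sc false x| = m.+1.
Proof. by move=> x hx; rewrite (card_Sc false hx) /nb; lia. Qed.
Lemma hS1 : forall x : Row m, #|Os x| = m.+1 -> #|Sc true x| = m.+1.
Proof. by move=> x hx; rewrite (card_Sc true hx). Qed.
Lemma hcF : forall (x : Row m) b, x b = false ->
  (#|Os x| == m) = (#|Os (upd x b (~~ false))| == m.+1).
Proof. by move=> x b hb /=; rewrite card_updT. Qed.
Lemma hcT : forall (x : Row m) b, x b = true ->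
  (#|Os x| == m.+1) = (#|Os (upd x b (~~ true))| == m).
Proof. by move=> x b hb /=; rewrite (card_updF hb) eqSS. Qed.

Lemma rowE (i : 'I_n) (h : Row m -> R) :
  \sum_(x : Row m) unif_row R i.+1 x * G i x h = \sum_(x : Row m) rho i x * h x.
Proof.
rewrite /G /rho; case: (eqVneq i sm) => [->|hi1] /=.
  have -> : (sm : nat).+1 = m by rewrite sm_val; move: hm; case: (m) => //.
  under eq_bigr do rewrite Zs_S.
  rewrite split_c.
  have F := @flippart false m m.+1 hS0 hS1 erefl Cm1 hcF h.
  have K := @keep false m hS0 h.
  rewrite /= in F; rewrite F K -big_split /=; apply: eq_bigr => x _.
  rewrite /mix; ring.
case: (eqVneq i sm1) => [->|hi2] /=.
  rewrite sm1_val.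
  under eq_bigr do rewrite Os_S.
  rewrite split_c.
  have F := @flippart true m.+1 m hS1 hS0 Cm1 erefl hcT h.
  have K := @keep true m.+1 hS1 h.
  rewrite /= in F; rewrite F K -big_split /=; apply: eq_bigr => x _.
  rewrite /mix; ring.
done.
Qed.


Lemma factor_rho (f : 'I_n -> Row m -> R) :
  expect R (fun w : Omega m => \prod_(i < n) f i (Vrow w i)) =
  \prod_(i < n) \sum_(x : Row m) rho i x * f i x.
Proof.
rewrite (factor (fun i _ v => f i v)); apply: eq_bigr => i _; exact: rowE.
Qed.

Lemma sum_unif_row k : (k <= n)%N -> \sum_(x : Row m) unif_row R k x = 1.
Proof.
move=> hk.
rewrite (reindex (fun A : {set 'I_n} => ([ffun j => j \in A] : Row m))) /=; last first.
  exists (fun x : Row m => [set j | x j]) => [A _|x _].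
    by apply/setP => j; rewrite inE ffunE.
  by apply/ffunP => j; rewrite ffunE inE.
rewrite (eq_bigr (fun A : {set 'I_n} => if #|A| == k then ('C(n, k))%:R^-1 else 0 : R)); last first.
  move=> A _; have hA : [set j | ([ffun j => j \in A] : Row m) j] = A.
    by apply/setP => j; rewrite inE ffunE.
  by rewrite /unif_row hA.
rewrite -big_mkcond /= sumr_const.
have -> : #|[pred A : {set 'I_n} | #|A| == k]| = 'C(n, k).
  have := @card_draws 'I_n k; rewrite card_ord => <-; by apply: eq_card => A; rewrite !inE.
by rewrite -[LHS]mulr_natr mulVf // pnatr_eq0 -lt0n bin_gt0.
Qed.

Lemma sum_rho i : \sum_(x : Row m) rho i x = 1.
Proof.
rewrite /rho; case: ((i == sm) || (i == sm1)); last exact: sum_unif_row.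
rewrite big_split /= -(big_distrr (2^-1 : R)) -(big_distrr (2^-1 : R)) /= !sum_unif_row /nb; try lia.
by rewrite -mulrDr -[1 + 1]/(2 : R) mulVf // pnatr_eq0.
Qed.

Lemma sumG_const (i : 'I_n) (c : Row m -> R) :
  \sum_(x : Row m) unif_row R i.+1 x * G i x (fun _ => c x) =
  \sum_(x : Row m) unif_row R i.+1 x * c x.
Proof.
apply: eq_bigr => x _; rewrite /unif_row -/(Os x).
case: eqP => hx; last by rewrite !mul0r.
congr (_ * _); rewrite /G.
have hE (A : {set 'I_n}) : A != set0 -> \sum_b \sum_(c' : bool) (unif_on R A b / 2 * c x) = c x.
  move=> hA; transitivity ((\sum_b unif_on R A b) * c x); last by rewrite sum_unif_on ?mul1r.
  rewrite big_distrl /=; apply: eq_bigr => b _; rewrite big_bool /=; by field.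
case: (eqVneq i sm) => [hi|hi1].
  apply: hE; rewrite -card_gt0 card_Zs hx hi sm_val /nb; lia.
case: (eqVneq i sm1) => [hi|hi2] //.
apply: hE; rewrite -card_gt0 hx; lia.
Qed.

Lemma probE (E : pred (Omega m)) : prob R E = expect R (fun w => (E w)%:R).
Proof.
rewrite /prob /expect big_mkcond /=; apply: eq_bigr => w _.
by case: (E w); rewrite ?mulr1 ?mulr0.
Qed.

Lemma expect_ext (f f' : Omega m -> R) : (forall w, f w = f' w) -> expect R f = expect R f'.
Proof. by move=> h; apply: eq_bigr => w _; rewrite h. Qed.

Lemma probX (v : Row m) (i : 'I_n) :
  prob R (fun w => Xof w i == v) = unif_row R i.+1 v.
Proof.
rewrite probE.
pose g k (x : Row m) (_ : Row m) : R := if k == i then (x == v)%:R else 1.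
rewrite (@expect_ext _ (fun w => \prod_(k < n) g k (Xof w k) (Vrow w k))); last first.
  move=> w; rewrite (bigD1 i) //= /g eqxx [X in _ = _ * X]big1 ?mulr1 // => k hk.
  by rewrite (negbTE hk).
rewrite factor (bigD1 i) //= [X in _ * X]big1 ?mulr1; last first.
  move=> k hk; rewrite /g (negbTE hk).
  rewrite (sumG_const k (fun _ => 1)).
  under eq_bigr do rewrite mulr1.
  by apply: sum_unif_row.
rewrite /g eqxx (sumG_const i (fun x => (x == v)%:R)).
rewrite (bigD1 v) //= eqxx mulr1 big1 ?addr0 // => x hx.
by rewrite (negbTE hx) mulr0.
Qed.


Definition px (p : {perm 'I_n}) (x : Row m) : Row m := [ffun i => x (p i)].

Lemma unif_px p s (x : Row m) : unif_row R s (px p x) = unif_row R s x.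
Proof.
rewrite /unif_row; have -> : [set j | px p x j] = p @^-1: [set j | x j].
  by apply/setP => j; rewrite !inE ffunE.
by rewrite card_preimset //; exact: perm_inj.
Qed.

Lemma sum_px p s (F : Row m -> R) :
  \sum_(x : Row m) unif_row R s x * F x = \sum_(x : Row m) unif_row R s x * F (px p x).
Proof.
rewrite (reindex (px p)) /=; last first.
  exists (px p^-1) => x _; apply/ffunP => j; rewrite !ffunE.
    by rewrite permKV.
  by rewrite permK.
by apply: eq_bigr => x _; rewrite unif_px.
Qed.

Lemma sum_ind (x : Row m) : \sum_(j < n) ((x j)%:R : R) = (#|Os x|)%:R.
Proof.
rewrite -natr_sum; congr (_%:R).
rewrite -sum1_card [RHS]big_mkcond /=; apply: eq_bigr => j _.
by rewrite inE; case: (x j).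
Qed.

Lemma colA s (j : 'I_n) : (s <= n)%N ->
  \sum_(x : Row m) unif_row R s x * (x j)%:R = s%:R / n%:R.
Proof.
move=> hs.
have eqa : forall j', \sum_(x : Row m) unif_row R s x * (x j')%:R =
                      \sum_(x : Row m) unif_row R s x * (x j)%:R.
  move=> j'; rewrite (sum_px (tperm j j')); apply: eq_bigr => x _.
  by rewrite ffunE tpermR.
have tot : \sum_(j' < n) \sum_(x : Row m) unif_row R s x * (x j')%:R = s%:R.
  rewrite exchange_big /=.
  rewrite (eq_bigr (fun x => unif_row R s x * s%:R)); last first.
    move=> x _; rewrite -big_distrr /= sum_ind /unif_row.
    by case: eqP => [->|]; rewrite ?mul0r.
  by rewrite -big_distrl /= sum_unif_row // mul1r.
move: tot; rewrite (eq_bigr _ (fun j' _ => eqa j')) sumr_const card_ord => <-.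
rewrite -[_ *+ n]mulr_natr mulfK //.
by rewrite pnatr_eq0.
Qed.

Lemma n_gt1 : (1 < n)%N.
Proof. rewrite /nb; lia. Qed.

Lemma colB s (j k : 'I_n) : (s <= n)%N -> j != k ->
  \sum_(x : Row m) unif_row R s x * ((x j)%:R * (x k)%:R) =
  s%:R * (s%:R - 1) / (n%:R * (n%:R - 1)).
Proof.
move=> hs hjk.
pose b k' := \sum_(x : Row m) unif_row R s x * ((x j)%:R * (x k')%:R).
have eqb : forall k', k' != j -> b k' = b k.
  move=> k' hk'; rewrite /b (sum_px (tperm k' k)); apply: eq_bigr => x _.
  by rewrite !ffunE tpermL tpermD // eq_sym.
have tot : \sum_(k' < n | k' != j) b k' = s%:R / n%:R * (s%:R - 1).
  rewrite /b exchange_big /= -(colA j hs) big_distrl /=; apply: eq_bigr => x _.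
  rewrite -big_distrr -big_distrr /= -mulrA.
  have := sum_ind x; rewrite (bigD1 j) //= => hsum.
  rewrite /unif_row -/(Os x); case: eqP => hx; last by rewrite !mul0r.
  congr (_ * _); move: hsum; rewrite hx; case: (x j) => /= hsum; last by rewrite !mul0r.
  rewrite -hsum; ring.
move: tot; rewrite (eq_bigr _ eqb) sumr_const.
have -> : #|[pred k' : 'I_n | k' != j]| = n.-1.
  have := cardC1 j; rewrite card_ord => <-; by apply: eq_card => i; rewrite !inE.
have hn : (n%:R : R) = (n.-1)%:R + 1 by rewrite natr1 prednK.
rewrite -[_ *+ n.-1]mulr_natr /b => H.
have hn0 : (n%:R : R) != 0 by rewrite pnatr_eq0.
have hn1 : ((n.-1)%:R : R) != 0 by rewrite pnatr_eq0 /nb /=; lia.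
apply: (mulIf hn1); rewrite H hn.
by field; rewrite addrK hn1 -hn hn0.
Qed.

Lemma sgE (b : bool) : ((-1) ^+ b : R) = 1 - 2 * b%:R.
Proof. by case: b; rewrite /= ?expr0 ?expr1; ring. Qed.

Lemma colS1 s (j : 'I_n) : (s <= n)%N ->
  \sum_(x : Row m) unif_row R s x * (-1) ^+ (x j) = 1 - 2 * (s%:R / n%:R).
Proof.
move=> hs.
rewrite (eq_bigr (fun x : Row m => unif_row R s x - 2 * (unif_row R s x * (x j)%:R))); last first.
  by move=> x _; rewrite sgE; ring.
by rewrite sumrB -mulr_sumr sum_unif_row // colA.
Qed.

Lemma colS2 s (j k : 'I_n) : (s <= n)%N -> j != k ->
  \sum_(x : Row m) unif_row R s x * ((-1) ^+ (x j) * (-1) ^+ (x k)) =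
  1 - 2 * (s%:R / n%:R) - 2 * (s%:R / n%:R) +
  4 * (s%:R * (s%:R - 1) / (n%:R * (n%:R - 1))).
Proof.
move=> hs hjk.
rewrite (eq_bigr (fun x : Row m => unif_row R s x - 2 * (unif_row R s x * (x j)%:R)
   - 2 * (unif_row R s x * (x k)%:R) + 4 * (unif_row R s x * ((x j)%:R * (x k)%:R)))); last first.
  by move=> x _; rewrite !sgE; ring.
by rewrite big_split /= !sumrB -!mulr_sumr sum_unif_row // !colA // colB.
Qed.

Lemma lamE s : (1 <= s)%N ->
  lam n 2 s = 1 - 2 * (s%:R / n%:R) - 2 * (s%:R / n%:R) +
  4 * (s%:R * (s%:R - 1) / (n%:R * (n%:R - 1))) :> R.
Proof.
move=> hs; rewrite /lam !big_ord_recr big_ord0 /=.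
rewrite !ffactnSr !ffactn0 /= !mul1n !subn0 !natrM !natrB //.
rewrite bin0 bin1 binn /=.
have hn0 : (n%:R : R) != 0 by rewrite pnatr_eq0.
have hn1 : (n%:R - 1 : R) != 0.
  by rewrite subr_eq0; apply/eqP => h; have := n_gt1; rewrite -(ltr1n R) h ltxx.
by field; rewrite hn0 hn1.
Qed.

Lemma expectD (f f' : Omega m -> R) :
  expect R (fun w => f w + f' w) = expect R f + expect R f'.
Proof. by rewrite /expect -big_split; apply: eq_bigr => w _; rewrite mulrDr. Qed.

Lemma expectZ c (f : Omega m -> R) : expect R (fun w => c * f w) = c * expect R f.
Proof. by rewrite /expect mulr_sumr; apply: eq_bigr => w _; rewrite mulrCA. Qed.

Lemma expect_sum (F : 'I_n -> Omega m -> R) :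
  expect R (fun w => \sum_(j < n) F j w) = \sum_(j < n) expect R (F j).
Proof.
rewrite /expect exchange_big /=; apply: eq_bigr => w _; exact: mulr_sumr.
Qed.

Lemma expect1 : expect R (fun _ : Omega m => 1) = 1.
Proof.
have := factor_rho (fun _ _ => 1).
rewrite [RHS]big1 => [H|i _]; last by under eq_bigr do rewrite mulr1; exact: sum_rho.
rewrite -[RHS]H; apply: expect_ext => w; by rewrite big1.
Qed.

Lemma expectC c : expect R (fun _ : Omega m => c) = c.
Proof.
by rewrite (@expect_ext _ (fun _ => c * 1)) ?expectZ ?expect1 ?mulr1 // => w; rewrite mulr1.
Qed.

Lemma sum_mix (h : Row m -> R) :
  \sum_(x : Row m) mix x * h x =
  2^-1 * \sum_(x : Row m) unif_row R m x * h x + 2^-1 * \sum_(x : Row m) unif_row R m.+1 x * h x.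
Proof.
rewrite !mulr_sumr -big_split /=; apply: eq_bigr => x _; rewrite /mix; ring.
Qed.

Lemma nR : (n%:R : R) = 2 * m%:R + 1.
Proof. by rewrite /nb -addn1 natrD -mul2n natrM. Qed.

Lemma nR0 : (n%:R : R) != 0.
Proof. by rewrite pnatr_eq0. Qed.

Lemma m_le : (m <= n)%N.
Proof. rewrite /nb; lia. Qed.
Lemma m1_le : (m.+1 <= n)%N.
Proof. rewrite /nb; lia. Qed.

Definition sgj (w : Omega m) (j : 'I_n) : R := \prod_(i < n) (-1) ^+ (Vrow w i j).

Lemma E_sg j : expect R (fun w => sgj w j) = 0.
Proof.
rewrite /sgj (factor_rho (fun i (x : Row m) => (-1) ^+ (x j))).
rewrite (bigD1 sm) //= /rho eqxx /= sum_mix !colS1 ?m_le ?m1_le //.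
have hn := nR0; rewrite nR in hn *.
rewrite [X in X * _](_ : _ = 0) ?mul0r //.
by field.
Qed.

Lemma sm_succ : (sm : nat).+1 = m.
Proof. by rewrite sm_val; move: hm; case: (m). Qed.
Lemma sm1_succ : (sm1 : nat).+1 = m.+1.
Proof. by rewrite sm1_val. Qed.

Lemma rho_col2 (i : 'I_n) (j k : 'I_n) : j != k ->
  \sum_(x : Row m) rho i x * ((-1) ^+ (x j) * (-1) ^+ (x k)) =
  if (i == sm) || (i == sm1) then 2^-1 * (lam n 2 m + lam n 2 m.+1) else lam n 2 i.+1.
Proof.
move=> hjk; rewrite /rho; case: ((i == sm) || (i == sm1)).
  rewrite sum_mix !colS2 ?m_le ?m1_le // !lamE //; ring.
rewrite colS2 ?lamE //; exact: ltn_ord.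
Qed.

Lemma prod_lambar :
  \prod_(i < n) (if (i == sm) || (i == sm1) then 2^-1 * (lam n 2 m + lam n 2 m.+1) else lam n 2 i.+1)
  = lambar R m.
Proof.
rewrite /lambar (bigD1 sm) //= eqxx (bigD1 sm1) /=; last exact: sm_neq.
rewrite eqxx orbT expr2 mulrA [X in _ = X]mulrC mulrA; congr (_ * _ * _).
rewrite big_add1 /= big_mkord.
apply: eq_big => i.
  have h1 : (i == sm) = (i.+1 == m)%N.
    by apply/eqP/eqP => [->|h]; [exact: sm_succ | apply: val_inj; rewrite /= sm_val; move: h; lia].
  have h2 : (i == sm1) = (i.+1 == m.+1)%N.
    by apply/eqP/eqP => [->|h]; [exact: sm1_succ | apply: val_inj; rewrite /= sm1_val; move: h; lia].
  by rewrite h1 h2.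
by move=> /andP[/negbTE -> /negbTE ->].
Qed.

Lemma prod_split (w : Omega m) j k :
  sgj w j * sgj w k = \prod_(i < n) ((-1) ^+ (Vrow w i j) * (-1) ^+ (Vrow w i k)).
Proof. by rewrite /sgj big_split. Qed.

Lemma E_sg2 j k : j != k -> expect R (fun w => sgj w j * sgj w k) = lambar R m.
Proof.
move=> hjk; rewrite (expect_ext (fun w => prod_split w j k)).
rewrite (factor_rho (fun i (x : Row m) => (-1) ^+ (x j) * (-1) ^+ (x k))).
rewrite -prod_lambar; apply: eq_bigr => i _; exact: rho_col2.
Qed.

Lemma E_sgsq j : expect R (fun w => sgj w j * sgj w j) = 1.
Proof.
rewrite -expect1; apply: expect_ext => w; rewrite prod_split big1 // => i _.
by rewrite -expr2 sqrr_sign.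
Qed.

Lemma sgj_sum w j : sgj w j = (-1) ^+ (\sum_(i < n) Vrow w i j).
Proof. by rewrite /sgj expr_sum. Qed.

Lemma VjR w j : ((Vj w j)%:R : R) = (1 - sgj w j) / 2.
Proof.
rewrite sgj_sum /Vj modn2 -signr_odd.
by case: (odd _) => /=; rewrite ?expr0 ?expr1; field.
Qed.

Lemma Vj1R w j : (((Vj w j == 1%N) : nat)%:R : R) = (1 - sgj w j) / 2.
Proof.
rewrite sgj_sum /Vj modn2 -signr_odd.
by case: (odd _) => /=; rewrite ?expr0 ?expr1; field.
Qed.

Lemma prob_row i (P : pred (Row m)) :
  prob R (fun w => P (Vrow w i)) = \sum_(x : Row m) rho i x * (P x)%:R.
Proof.
rewrite probE.
have H := factor_rho (fun k (x : Row m) => if k == i then ((P x) : nat)%:R else 1).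
rewrite (bigD1 i) //= eqxx [X in _ * X]big1 ?mulr1 in H; last first.
  by move=> k hk; rewrite (negbTE hk); under eq_bigr do rewrite mulr1; exact: sum_rho.
rewrite -H; apply: expect_ext => w.
rewrite (bigD1 i) //= eqxx [X in _ = _ * X]big1 ?mulr1 // => k hk.
by rewrite (negbTE hk).
Qed.

Lemma forall_prod (P : 'I_n -> bool) :
  (([forall i, P i]) : nat)%:R = \prod_(i < n) ((P i) : nat)%:R :> R.
Proof.
case: (boolP [forall i, P i]) => [/forallP h | /forallPn [i hi]].
  by rewrite big1 // => i _; rewrite h.
by rewrite (bigD1 i) //= (negbTE hi) mul0r.
Qed.
End S.

Unset Implicit Arguments.
Theorem lemma3p4 (R : realFieldType) (m : nat) (hm : (0 < m)%N) :
  [/\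
   (forall A : 'I_(nb m) -> {set Row m},
      prob R (fun w => [forall i, Vrow w i \in A i]) =
      \prod_(i < nb m) prob R (fun w => Vrow w i \in A i)),
   (forall i, i \in [:: stage m m; stage m m.+1] -> forall v : Row m,
      prob R (fun w => Vrow w i == v) =
      2^-1 * prob R (fun w => Xof w (stage m m) == v) +
      2^-1 * prob R (fun w => Xof w (stage m m.+1) == v)),
   (forall j : 'I_(nb m), prob R (fun w => Vj w j == 1%N) = 2^-1),
   expect R (fun w : Omega m => (Vtot w)%:R) = (nb m)%:R / 2 &
   var R (fun w : Omega m => (Vtot w)%:R) =
     (nb m)%:R / 4 * (1 - lambar R m) + (nb m)%:R ^+ 2 / 4 * lambar R m].
Proof.
have hE : expect R (fun w : Omega m => (Vtot w)%:R) = (nb m)%:R / 2.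
  rewrite (expect_ext (f' := fun w => \sum_(j < nb m) (2^-1 + (-2^-1) * sgj R w j))); last first.
    move=> w; rewrite /Vtot natr_sum; apply: eq_bigr => j _; rewrite VjR; ring.
  rewrite expect_sum (eq_bigr (fun _ => 2^-1)); last first.
    by move=> j _; rewrite expectD expectC // expectZ E_sg // mulr0 addr0.
  by rewrite sumr_const card_ord -[LHS]mulr_natr mulrC.
split.
- move=> A; rewrite probE (expect_ext (fun w => forall_prod R (fun i => Vrow w i \in A i))).
  rewrite (factor_rho hm (fun i (x : Row m) => ((x \in A i) : nat)%:R)).
  by apply: eq_bigr => i _; rewrite (prob_row R hm i (fun x => x \in A i)).
- move=> i hi v; rewrite (prob_row R hm i (fun x => x == v)) (probX R hm) (probX R hm) (sm_succ hm) sm1_succ; last exact: hm.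
  rewrite (bigD1 v) //= eqxx mulr1 big1 ?addr0; last first.
    by move=> x hx; rewrite (negbTE hx) mulr0.
  by rewrite !inE in hi; rewrite /rho hi /mix.
- move=> j; rewrite probE (expect_ext (fun w => Vj1R R w j)).
  rewrite (expect_ext (f' := fun w => 2^-1 + (-2^-1) * sgj R w j)); last by move=> w; ring.
  by rewrite expectD expectC // expectZ E_sg // mulr0 addr0.
- exact: hE.
rewrite /var hE.
have hdev : forall w : Omega m, (Vtot w)%:R - (nb m)%:R / 2 =
    \sum_(j < nb m) (- 2^-1 * sgj R w j) :> R.
  move=> w; rewrite /Vtot natr_sum.
  have -> : (nb m)%:R / 2 = \sum_(j < nb m) (2^-1 : R).
    by rewrite sumr_const card_ord -[RHS]mulr_natr mulrC.
  rewrite -sumrB; apply: eq_bigr => j _; rewrite VjR mulrBl mul1r addrAC subrr add0r mulNr; congr (- _); exact: mulrC.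
transitivity (expect R (fun w : Omega m => \sum_(j < nb m) \sum_(k < nb m)
           (4^-1 * (sgj R w j * sgj R w k)))).
  apply: expect_ext => w; rewrite hdev expr2 big_distrl /=; apply: eq_bigr => j _.
  rewrite big_distrr /=; apply: eq_bigr => k _; by field.
transitivity (\sum_(j < nb m) expect R (fun w : Omega m =>
   \sum_(k < nb m) 4^-1 * (sgj R w j * sgj R w k))).
  exact: (expect_sum (fun j w => \sum_(k < nb m) 4^-1 * (sgj R w j * sgj R w k))).
rewrite (eq_bigr (fun _ => 4^-1 * (1 + ((nb m).-1)%:R * lambar R m))); last first.
  move=> j _; transitivity (\sum_(k < nb m) expect R (fun w : Omega m =>
     4^-1 * (sgj R w j * sgj R w k))).
    exact: (expect_sum (fun k w => 4^-1 * (sgj R w j * sgj R w k))).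
  rewrite (bigD1 j) //=.
  rewrite expectZ E_sgsq //.
  rewrite (eq_bigr (fun _ => 4^-1 * lambar R m)); last first.
    by move=> k hk; rewrite expectZ E_sg2 // eq_sym.
  rewrite sumr_const.
  have -> : #|[pred k : 'I_(nb m) | k != j]| = (nb m).-1.
    have := cardC1 j; rewrite card_ord => <-; by apply: eq_card => i; rewrite !inE.
  rewrite -[_ *+ _]mulr_natr; ring.
rewrite sumr_const card_ord -[_ *+ _]mulr_natr.
have hn : ((nb m)%:R : R) = ((nb m).-1)%:R + 1 by rewrite natr1 prednK.
rewrite hn; ring.
Qed.
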